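(* The structure $\varphi$ is Abelian, i.e. $[\varphi x,\varphi y]=[x,y]$ for all $x,y\in\mathfrak l$, if and only if $(L,\varphi,\xi,\eta,g)$ belongs to $\mathcal{F}_1\oplus\mathcal{F}_8\oplus\mathcal{F}_{10}$ with $2\lambda=\nu$, where $\lambda=F_{101}$ and $\nu=F_{011}$.
   Context: Let $L$ be a 3-dimensional real connected Lie group with Lie algebra $\mathfrak l$, and let $\{E_0,E_1,E_2\}$ be a basis of left-invariant vector fields, with $[E_i,E_j]=C_{ij}^kE_k$. Define the left-invariant almost contact structure $(\varphi,\xi,\eta)$ by $\varphi E_0=0$, $\varphi E_1=E_2$, $\varphi E_2=-E_1$, $\xi=E_0$, $\eta(E_0)=1$, $\eta(E_1)=\eta(E_2)=0$, and the left-invariant pseudo-Riemannian metric $g$ by $g(E_0,E_0)=g(E_1,E_1)=-g(E_2,E_2)=1$, $g(E_i,E_j)=0$ for $i\neq j$. Let $\nabla$ be the Levi-Civita connection of $g$, $F(x,y,z)=g((\nabla_x\varphi)y,z)$, and $F_{ijk}=F(E_i,E_j,E_k)$. The manifold belongs to $\mathcal{F}_1\oplus\mathcal{F}_8\oplus\mathcal{F}_{10}$ iff all $F_{ijk}$ vanish except possibly $F_{111}=F_{122}$, $F_{211}=F_{222}$ (the $\mathcal{F}_1$ part), $F_{101}=F_{110}=F_{202}=F_{220}=:\lambda$ (the $\mathcal{F}_8$ part) and $F_{011}=F_{022}=:\nu$ (the $\mathcal{F}_{10}$ part). *)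

(* Defs.v *)
From Stdlib Require Import Reals.
Open Scope R_scope.

Inductive idx : Type := I0 | I1 | I2.

(* Elements of l are coordinate vectors w.r.t. {E_0,E_1,E_2}. *)
Definition vec := idx -> R.

Definition sum3 (f : idx -> R) : R := f I0 + f I1 + f I2.

Definition E (i : idx) : vec := fun k =>
  match i, k with
  | I0, I0 | I1, I1 | I2, I2 => 1
  | _, _ => 0
  end.

(* Structure constants: [E_i, E_j] = sum_k C i j k E_k. *)
Definition structure_consts := idx -> idx -> idx -> R.

Definition is_lie_algebra (C : structure_consts) : Prop :=
  (forall i j k, C i j k = - C j i k) /\
  (forall i j k m,
     sum3 (fun l => C i j l * C l k m + C j k l * C l i m + C k i l * C l j m) = 0).

Definition brk (C : structure_consts) (x y : vec) : vec := fun k =>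
  sum3 (fun i => sum3 (fun j => x i * y j * C i j k)).

Definition eps (i : idx) : R := match i with I0 => 1 | I1 => 1 | I2 => -1 end.

Definition g (x y : vec) : R := sum3 (fun i => eps i * x i * y i).

Definition phi (x : vec) : vec := fun k =>
  match k with I0 => 0 | I1 => - x I2 | I2 => x I1 end.

(* Levi-Civita connection on left-invariant vector fields, given by the
   Koszul formula  2 g(nabla_x y, z) = g([x,y],z) - g([y,z],x) + g([z,x],y),
   solved using the orthonormal basis (g(E_k,E_k) = eps k, eps k^2 = 1). *)
Definition nabla (C : structure_consts) (x y : vec) : vec := fun k =>
  eps k * (/2) * (g (brk C x y) (E k) - g (brk C y (E k)) x + g (brk C (E k) x) y).

(* F(x,y,z) = g((nabla_x phi) y, z) *)
Definition F (C : structure_consts) (x y z : vec) : R :=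
  g (fun k => nabla C x (phi y) k - phi (nabla C x y) k) z.

Definition Fijk (C : structure_consts) (i j k : idx) : R := F C (E i) (E j) (E k).

Definition allowed (i j k : idx) : bool :=
  match i, j, k with
  | I1, I1, I1 | I1, I2, I2 | I2, I1, I1 | I2, I2, I2   (* F_1 *)
  | I1, I0, I1 | I1, I1, I0 | I2, I0, I2 | I2, I2, I0   (* F_8 *)
  | I0, I1, I1 | I0, I2, I2 => true                     (* F_10 *)
  | _, _, _ => false
  end.

Definition in_F1_F8_F10 (C : structure_consts) : Prop :=
  (forall i j k, allowed i j k = false -> Fijk C i j k = 0) /\
  Fijk C I1 I1 I1 = Fijk C I1 I2 I2 /\
  Fijk C I2 I1 I1 = Fijk C I2 I2 I2 /\
  Fijk C I1 I0 I1 = Fijk C I1 I1 I0 /\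
  Fijk C I1 I1 I0 = Fijk C I2 I0 I2 /\
  Fijk C I2 I0 I2 = Fijk C I2 I2 I0 /\
  Fijk C I0 I1 I1 = Fijk C I0 I2 I2.

Definition phi_abelian (C : structure_consts) : Prop :=
  forall x y : vec, forall k, brk C (phi x) (phi y) k = brk C x y k.

(* Main.v *)
Require Import Defs.
From Stdlib Require Import Reals Lra.
Open Scope R_scope.

Ltac simpC H :=
  repeat match goal with
  | |- context [?C I1 I0 ?k] => rewrite (H I1 I0 k)
  | |- context [?C I2 I0 ?k] => rewrite (H I2 I0 k)
  | |- context [?C I2 I1 ?k] => rewrite (H I2 I1 k)
  end.

Lemma diag (C : structure_consts) (H : forall i j k, C i j k = - C j i k) i k :
  C i i k = 0.
Proof. pose proof (H i i k). lra. Qed.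

Ltac simpD H :=
  repeat match goal with
  | |- context [?C ?i ?i ?k] => rewrite (diag C H i k)
  end.

Theorem theorem2p5 (C : structure_consts) (HC : is_lie_algebra C) :
  phi_abelian C <->
  (in_F1_F8_F10 C /\ 2 * Fijk C I1 I0 I1 = Fijk C I0 I1 I1).
Proof.
  destruct HC as [Ha _].
  split.
  - intro Hab.
    assert (HA : forall k, C I0 I1 k = 0).
    { intro k. pose proof (Hab (E I0) (E I1) k) as Hk.
      unfold brk, phi, E, sum3 in Hk; simpl in Hk. revert Hk. simpC Ha. simpD Ha. intro Hk. lra. }
    assert (HB : forall k, C I0 I2 k = 0).
    { intro k. pose proof (Hab (E I0) (E I2) k) as Hk.
      unfold brk, phi, E, sum3 in Hk; simpl in Hk. revert Hk. simpC Ha. simpD Ha. intro Hk. lra. }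
    pose proof (HA I0); pose proof (HA I1); pose proof (HA I2);
    pose proof (HB I0); pose proof (HB I1); pose proof (HB I2).
    unfold in_F1_F8_F10; repeat split;
      [intros i j k; destruct i, j, k; simpl; try discriminate; intros _ | ..];
      unfold Fijk, F, nabla, g, brk, phi, E, eps, sum3; simpl; simpC Ha; simpD Ha; lra.
  - intros [[H0 [H1 [H2 [H3 [H4 [H5 H6]]]]]] H7].
    revert H0 H1 H2 H3 H4 H5 H6 H7.
    unfold Fijk, F, nabla, g, brk, phi, E, eps, sum3; simpl; simpC Ha; simpD Ha.
    intros H0 H1 H2 H3 H4 H5 H6 H7.
    pose proof (H0 I0 I0 I1 eq_refl) as a1; pose proof (H0 I0 I0 I2 eq_refl) as a2;
    pose proof (H0 I1 I0 I2 eq_refl) as a3; pose proof (H0 I2 I0 I1 eq_refl) as a4.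
    simpl in a1, a2, a3, a4. revert a1 a2 a3 a4. simpC Ha. simpD Ha. intros a1 a2 a3 a4.
    assert (e1 : C I0 I0 I0 = 0) by apply (diag C Ha).
    assert (HA0 : C I0 I1 I0 = 0) by lra.
    assert (HA1 : C I0 I1 I1 = 0) by lra.
    assert (HA2 : C I0 I1 I2 = 0) by lra.
    assert (HB0 : C I0 I2 I0 = 0) by lra.
    assert (HB1 : C I0 I2 I1 = 0) by lra.
    assert (HB2 : C I0 I2 I2 = 0) by lra.
    intros x y k. unfold brk, phi, sum3. destruct k; simpl; simpC Ha; simpD Ha;
      rewrite ?HA0, ?HA1, ?HA2, ?HB0, ?HB1, ?HB2; ring.
Qed.
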